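(* Let $k\in\{1,2,3\}$. A rule of a $3$-state $3$-neighbor vector-valued fuzzy cellular automaton ($3$-VFCA) is $k$-number-conserving if and only if the corresponding $3$-state $3$-neighbor vector-valued cellular automaton ($3$-VCA) is $k$-number-conserving.
   Context: Let $\bm{e}_1,\bm{e}_2,\bm{e}_3$ be the standard basis of $\mathbb{R}^3$ and $\Delta=\{(x_1,x_2,x_3)^{\top}\mid x_1+x_2+x_3=1,\ x_i\ge 0\}$. A $3$-VCA is given by a local rule $h:\{\bm{e}_1,\bm{e}_2,\bm{e}_3\}^3\to\{\bm{e}_1,\bm{e}_2,\bm{e}_3\}$; its cells $i\in\mathbb{Z}$ have states $\bm{x}_i^t\in\{\bm{e}_1,\bm{e}_2,\bm{e}_3\}$ evolving by $\bm{x}_i^{t+1}=h(\bm{x}_{i-1}^t,\bm{x}_i^t,\bm{x}_{i+1}^t)$. The corresponding $3$-VFCA has state set $\Delta$ and local rule $f:\Delta^3\to\Delta$, $f(\bm{x},\bm{y},\bm{z})=\sum_{j,k,\ell=1}^3 x_jy_kz_\ell\,h(\bm{e}_j,\bm{e}_k,\bm{e}_\ell)$, with the same update $\bm{x}_i^{t+1}=f(\bm{x}_{i-1}^t,\bm{x}_i^t,\bm{x}_{i+1}^t)$. Consider periodic configurations with positive integer period $L$, i.e. $\bm{x}_i^t=\bm{x}_{i+L}^t$. Writing $[\bm{x}]_k$ for the $k$th entry, set $\nu^t(k)=\sum_{i=1}^L[\bm{x}_i^t]_k$. The rule is $k$-number-conserving if $\nu^{t+1}(k)=\nu^t(k)$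 for all $t\in\mathbb{Z}_{\ge0}$ and every periodic initial configuration (of every period $L$), with states in $\{\bm{e}_1,\bm{e}_2,\bm{e}_3\}$ for the $3$-VCA and in $\Delta$ for the $3$-VFCA. *)

(* Defs.v *)
From HB Require Import structures.
From mathcomp Require Import all_boot all_order all_algebra.
From mathcomp Require Import reals.
Set Implicit Arguments. Unset Strict Implicit. Unset Printing Implicit Defensive.
Import Order.TTheory GRing.Theory Num.Theory.
Local Open Scope ring_scope.

(* The standard basis e_1,e_2,e_3 is indexed by 'I_3 (e_(j+1) <-> j : 'I_3).
   A local rule h : {e1,e2,e3}^3 -> {e1,e2,e3} is thus a function on indices. *)
Definition local_rule := 'I_3 -> 'I_3 -> 'I_3 -> 'I_3.

Definition ebasis (R : realType) (j : 'I_3) : 'cV[R]_3 := delta_mx j 0.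

Definition in_simplex (R : realType) (x : 'cV[R]_3) : Prop :=
  (\sum_(j < 3) x j 0 = 1) /\ (forall j : 'I_3, 0 <= x j 0).

Definition vfca_rule (R : realType) (h : local_rule) (x y z : 'cV[R]_3) : 'cV[R]_3 :=
  \sum_(j < 3) \sum_(k < 3) \sum_(l < 3)
     (x j 0 * y k 0 * z l 0) *: ebasis R (h j k l).

Definition step (S : Type) (g : S -> S -> S -> S) (c : int -> S) : int -> S :=
  fun i => g (c (i - 1)) (c i) (c (i + 1)).

Definition evol (S : Type) (g : S -> S -> S -> S) (c : int -> S) (t : nat) : int -> S :=
  iter t (step g) c.

Definition periodic (S : Type) (L : nat) (c : int -> S) : Prop :=
  forall i : int, c (i + L%:Z) = c i.

(* nu^t(k) for the 3-VCA: sum_{i=1}^L [x_i]_k, where [e_j]_k = (j == k). *)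
Definition nu_vca (L : nat) (c : int -> 'I_3) (k : 'I_3) : nat :=
  \sum_(1 <= i < L.+1) (c (i%:Z) == k : nat).

Definition nu_vfca (R : realType) (L : nat) (c : int -> 'cV[R]_3) (k : 'I_3) : R :=
  \sum_(1 <= i < L.+1) c (i%:Z) k 0.

Definition vca_number_conserving (h : local_rule) (k : 'I_3) : Prop :=
  forall (L : nat) (c : int -> 'I_3), (0 < L)%N -> periodic L c ->
    forall t : nat, nu_vca L (evol h c t.+1) k = nu_vca L (evol h c t) k.

Definition vfca_number_conserving (R : realType) (h : local_rule) (k : 'I_3) : Prop :=
  forall (L : nat) (c : int -> 'cV[R]_3), (0 < L)%N -> periodic L c ->
    (forall i, in_simplex (c i)) ->
    forall t : nat,
      nu_vfca L (evol (vfca_rule h) c t.+1) k = nu_vfca L (evol (vfca_rule h) c t) k.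

(* Main.v *)
Require Import Defs.
From HB Require Import structures.
From mathcomp Require Import all_boot all_order all_algebra.
From mathcomp Require Import reals.
From mathcomp Require Import ring lra.
Import Order.TTheory GRing.Theory Num.Theory.
Local Open Scope ring_scope.

Section Aux.
Variable R : realType.
Variable h : local_rule.

Lemma coordE (x y z : 'cV[R]_3) n :
  vfca_rule h x y z n 0 = \sum_(j < 3) \sum_(m < 3) \sum_(l < 3)
     x j 0 * y m 0 * z l 0 * ((h j m l == n)%:R).
Proof.
rewrite /vfca_rule !summxE; apply eq_bigr=> j _; rewrite summxE;
apply eq_bigr=> m _; rewrite summxE; apply eq_bigr=> l _.
by rewrite !mxE eqxx andbT eq_sym.
Qed.

Lemma sum3_basis (a b c : 'I_3) (F : 'I_3 -> 'I_3 -> 'I_3 -> R) :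
  \sum_(j < 3) \sum_(m < 3) \sum_(l < 3)
     ebasis R a j 0 * ebasis R b m 0 * ebasis R c l 0 * F j m l = F a b c.
Proof.
rewrite (bigD1 a) //= [X in _ + X = _]big1 ?addr0; last first.
  move=> j /=/negbTE ne; apply: big1=> m _; apply: big1 => l _.
  by rewrite /ebasis !mxE ne /= ?mulr0 ?mul0r.
rewrite (bigD1 b) //= [X in _ + X = _]big1 ?addr0; last first.
  move=> m /=/negbTE ne; apply: big1 => l _.
  by rewrite /ebasis !mxE ne /= ?mulr0 ?mul0r.
rewrite (bigD1 c) //= [X in _ + X = _]big1 ?addr0; last first.
  move=> l /=/negbTE ne.
  by rewrite /ebasis !mxE ne /= ?mulr0 ?mul0r.
by rewrite /ebasis !mxE !eqxx /= !mul1r.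
Qed.

Lemma rule_basis a b c :
  vfca_rule h (ebasis R a) (ebasis R b) (ebasis R c) = ebasis R (h a b c).
Proof.
apply/matrixP => n z; rewrite ord1 coordE sum3_basis.
by rewrite /ebasis mxE eqxx andbT eq_sym.
Qed.

Lemma evol_emb (c : int -> 'I_3) t i :
  evol (vfca_rule h) (fun i => ebasis R (c i)) t i = ebasis R (evol h c t i).
Proof.
elim: t i => [|t IH] i //=.
by rewrite /step !IH rule_basis.
Qed.

Lemma nu_emb L (d : int -> 'I_3) k :
  nu_vfca L (fun i => ebasis R (d i)) k = (nu_vca L d k)%:R.
Proof.
rewrite /nu_vfca /nu_vca natr_sum; apply eq_bigr => i _.
by rewrite /ebasis mxE eqxx andbT eq_sym.
Qed.

Lemma sum_ind j m l : \sum_(n < 3) ((h j m l == n)%:R : R) = 1.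
Proof.
rewrite (bigD1 (h j m l)) //= eqxx big1 ?addr0 // => n.
by rewrite eq_sym => /=/negbTE ->.
Qed.

Lemma sum_rule (x y z : 'cV[R]_3) :
  \sum_(j < 3) x j 0 = 1 -> \sum_(j < 3) y j 0 = 1 -> \sum_(j < 3) z j 0 = 1 ->
  \sum_(n < 3) vfca_rule h x y z n 0 = 1.
Proof.
move=> Hx Hy Hz.
under eq_bigr do rewrite coordE.
transitivity (\sum_(j < 3) \sum_(m < 3) \sum_(l < 3) x j 0 * y m 0 * z l 0).
  rewrite exchange_big; apply eq_bigr=> j _; rewrite exchange_big;
  apply eq_bigr => m _; rewrite exchange_big; apply eq_bigr => l _.
  by rewrite -mulr_sumr sum_ind mulr1.
suff -> : \sum_(j < 3) \sum_(m < 3) \sum_(l < 3) x j 0 * y m 0 * z l 0 =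
  (\sum_(j < 3) x j 0) * (\sum_(j < 3) y j 0) * (\sum_(j < 3) z j 0).
  by rewrite Hx Hy Hz !mul1r.
rewrite !big_ord_recr !big_ord0 /=; ring.
Qed.

Definition Kt (K : 'I_3 -> 'I_3 -> R) (u v : 'cV[R]_3) : R :=
  \sum_(m < 3) \sum_(l < 3) u m 0 * v l 0 * K m l.

Lemma key (x y z : 'cV[R]_3) (P : 'I_3 -> 'I_3 -> 'I_3 -> R) (Q : 'I_3 -> R)
  (K : 'I_3 -> 'I_3 -> R) :
  (forall j m l, P j m l = Q m + K m l - K j m) ->
  \sum_(j < 3) x j 0 = 1 -> \sum_(j < 3) z j 0 = 1 ->
  \sum_(j < 3) \sum_(m < 3) \sum_(l < 3) x j 0 * y m 0 * z l 0 * P j m l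
  = \sum_(m < 3) y m 0 * Q m + Kt K y z - Kt K x y.
Proof.
move=> HP Hx Hz.
suff -> : \sum_(j < 3) \sum_(m < 3) \sum_(l < 3) x j 0 * y m 0 * z l 0 * P j m l
  = (\sum_(j < 3) x j 0) * (\sum_(j < 3) z j 0) * \sum_(m < 3) y m 0 * Q m
    + (\sum_(j < 3) x j 0) * Kt K y z - (\sum_(j < 3) z j 0) * Kt K x y.
  by rewrite Hx Hz !mul1r.
rewrite /Kt !big_ord_recr !big_ord0 /= !HP; ring.
Qed.

Lemma sum_delta (y : 'cV[R]_3) k : \sum_(m < 3) y m 0 * (m == k)%:R = y k 0.
Proof.
rewrite (bigD1 k) //= eqxx mulr1 big1 ?addr0 // => m /=/negbTE ->.
by rewrite mulr0.
Qed.

Lemma per_step (S : Type) (g : S -> S -> S -> S) L c :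
  periodic L c -> periodic L (step g c).
Proof.
move=> per i; rewrite /step.
by rewrite -(per (i - 1)) -(per (i + 1)) per (addrAC i L (-1)) (addrAC i L 1).
Qed.

Lemma vfca_one k (K : 'I_3 -> 'I_3 -> R) :
  (forall j m l, ((h j m l == k)%:R : R) = (m == k)%:R + K m l - K j m) ->
  forall L (c : int -> 'cV[R]_3), periodic L c ->
  (forall i, \sum_(j < 3) c i j 0 = 1) ->
  nu_vfca L (step (vfca_rule h) c) k = nu_vfca L c k.
Proof.
move=> HP L c per Hs.
rewrite /nu_vfca /step.
rewrite (eq_bigr (fun i : nat => c i%:Z k 0 + (Kt K (c i%:Z) (c (i%:Z + 1))
   - Kt K (c (i%:Z - 1)) (c i%:Z)))); last first.
  move=> i _; rewrite coordE.
  by rewrite (key _ _ _ _ _ _ HP) ?Hs // sum_delta addrA.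
rewrite big_split /=.
set u := fun n : nat => Kt K (c (n%:Z - 1)) (c n%:Z).
have E n : ((n.+1)%:Z - 1 = n%:Z) by rewrite intS addrAC subrr add0r.
have E2 n : ((n.+1)%:Z = n%:Z + 1) by rewrite intS addrC.
rewrite [X in _ + X = _](telescope_sumr_eq u) //; last first.
  by move=> i _; rewrite /u E E2.
have cL : c L = c 0 by rewrite -(per 0) add0r.
have cL1 : c L.+1 = c 1 by rewrite intS per.
by rewrite /u !E cL cL1 subrr addr0.
Qed.
End Aux.

Definition cw (w : seq 'I_3) (L : nat) (i : int) : 'I_3 := nth ord0 w (absz (i %% L%:Z)%Z).
Lemma cw_per w L : periodic L (cw w L).
Proof. by move=> i; rewrite /cw modzDr. Qed.
Lemma phi_decomp (R : realType) h k (H : vca_number_conserving h k) :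
  exists K : 'I_3 -> 'I_3 -> R, forall j m l,
   ((h j m l == k)%:R : R) = (m == k)%:R + K m l - K j m.
Proof.
pose D a b c : R := (h a b c == k)%:R - (b == k)%:R.
exists (fun a b => D ord0 ord0 a + D ord0 a b) => a b c.
have := H 1 (cw [:: ord0] 1) isT (cw_per _ _) 0.
rewrite /nu_vca /evol /step /cw unlock /= => /(congr1 (fun n => n%:R : R)).
rewrite !natrD => E0.
have := H 7 (cw [:: ord0; ord0; a; b; c; ord0; ord0] 7) isT (cw_per _ _) 0.
rewrite /nu_vca /evol /step /cw unlock /= => /(congr1 (fun n => n%:R : R)).
rewrite !natrD => E1.
have := H 7 (cw [:: ord0; ord0; b; c; ord0; ord0; ord0] 7) isT (cw_per _ _) 0.
rewrite /nu_vca /evol /step /cw unlock /= => /(congr1 (fun n => n%:R : R)).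
rewrite !natrD => E2.
rewrite /D.
lra.
Qed.

Lemma sum_ebasis (R : realType) a : \sum_(j < 3) ebasis R a j 0 = 1.
Proof.
rewrite (bigD1 a) //= /ebasis !mxE eqxx /= big1 ?addr0 // => j /=/negbTE ne.
by rewrite !mxE ne.
Qed.

Lemma nu_evol_emb (R : realType) h L (c : int -> 'I_3) t k :
  nu_vfca L (evol (vfca_rule h) (fun i => ebasis R (c i)) t) k = (nu_vca L (evol h c t) k)%:R.
Proof.
rewrite -nu_emb /nu_vfca; apply eq_bigr => i _; by rewrite evol_emb.
Qed.

Theorem mainTheorem2 (R : realType) (h : local_rule) (k : 'I_3) :
  vfca_number_conserving R h k <-> vca_number_conserving h k.
Proof.
split.
- move=> H L c L0 per t.
  have Hp : periodic L (fun i => ebasis R (c i)) by move=> i /=; rewrite per.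
  have Hs : forall i, in_simplex (ebasis R (c i)).
    move=> i; split; first exact: sum_ebasis.
    by move=> j; rewrite /ebasis mxE ler0n.
  have := H L _ L0 Hp Hs t.
  by rewrite !nu_evol_emb => /eqP; rewrite eqr_nat => /eqP.
- move=> H; have [K HK] := phi_decomp R _ _ H.
  move=> L c L0 per Hs t.
  have [pt st] : periodic L (evol (vfca_rule h) c t) /\ forall i, \sum_(j < 3) evol (vfca_rule h) c t i j 0 = 1.
    elim: t => [|t [pt st]] /=; first by split => // i; case: (Hs i).
    split; first exact: per_step.
    by move=> i; rewrite /step; apply: sum_rule.
  exact: (vfca_one _ _ _ _ HK _ _ pt st).
Qed.
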